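(* For any $p\ge 1$, $$\lim_{x\to\infty}\frac{-\ln\big(\nu_p([x,\infty))\big)}{\Lambda_{\nu_p}^{\ast}(x)}=1.$$
   Context: For $p\ge1$, $\nu_p$ is the probability measure on $\mathbb{R}$ with density $(2\gamma_p)^{-1}\exp(-|x|^p)$, where $\gamma_p=\Gamma(1+1/p)$. $\Lambda_{\nu_p}(t)=\ln\int_{\mathbb{R}}e^{tx}\,d\nu_p(x)$ and $\Lambda_{\nu_p}^{\ast}(x)=\sup_{t\in\mathbb{R}}\{tx-\Lambda_{\nu_p}(t)\}$. *)

(* Defs.v *)
From HB Require Import structures.
From mathcomp Require Import all_boot all_order all_algebra.
From mathcomp Require Import all_classical all_reals all_analysis.
Set Implicit Arguments. Unset Strict Implicit. Unset Printing Implicit Defensive.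
Import Order.TTheory GRing.Theory Num.Theory.
Import numFieldNormedType.Exports.
Local Open Scope classical_set_scope.
Local Open Scope ring_scope.

Section Defs.
Variable R : realType.
Notation mu := (@lebesgue_measure R).

Definition Gamma (s : R) : R :=
  fine (\int[mu]_(t in `]0, +oo[) (t `^ (s - 1) * expR (- t))%:E).

Definition gamma_p (p : R) : R := Gamma (1 + p^-1).

Definition nu_density (p : R) (x : R) : R :=
  (2 * gamma_p p)^-1 * expR (- (`|x| `^ p)).

Definition nu (p : R) (A : set R) : \bar R :=
  \int[mu]_(x in A) (nu_density p x)%:E.

Definition mgf (p : R) (t : R) : \bar R :=
  \int[mu]_(x in setT) (expR (t * x) * nu_density p x)%:E.

Definition Lambda (p : R) (t : R) : \bar R :=
  match mgf p t with
  | r%:E => (ln r)%:E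
  | +oo%E => +oo%E
  | -oo%E => -oo%E
  end.

Definition Lambda_star (p : R) (x : R) : \bar R :=
  ereal_sup [set ((t * x)%:E - Lambda p t)%E | t in [set: R]].

End Defs.

(* Main.v *)
Require Import Defs.
From HB Require Import structures.
From mathcomp Require Import all_boot all_order all_algebra.
From mathcomp Require Import all_classical all_reals all_analysis.
From mathcomp Require Import measurable_realfun ring lra.
Import Order.TTheory GRing.Theory Num.Theory.
Import numFieldNormedType.Exports.
Local Open Scope classical_set_scope.
Local Open Scope ring_scope.

Section A.
Context {R : realType}.
Notation mu := (@lebesgue_measure R).

Lemma cont_expk (k : R) : continuous (fun y : R => expR (- (k * y))).
Proof.
move=> z; apply: continuous_comp; last exact: continuous_expR.
apply: (@continuousN _ R^o); apply: continuousM => //; exact: cst_continuous.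
Qed.

Lemma int_expk (k a : R) : 0 < k ->
  (\int[mu]_(y in `[a, +oo[) (expR (- (k * y)))%:E = (expR (- (k * a)) / k)%:E)%E.
Proof.
move=> k0.
rewrite (@ge0_continuous_FTC2y _ (fun y => expR (- (k * y)))
  (fun y => - (expR (- (k * y)) / k)) a 0).
- by rewrite -EFinB sub0r opprK.
- by move=> ? ?; exact: expR_ge0.
- exact/continuous_subspaceT/cont_expk.
- rewrite -oppr0; apply: cvgN; rewrite -(mul0r k^-1); apply: cvgMl.
  apply: (@cvg_comp _ _ _ (fun z => k * z) (fun z => expR (- z)) _ (pinfty_nbhs R)).
    exact: gt0_cvgMry.
  exact: cvgr_expR.
- move=> x _; apply: derivableN; apply: derivableM => //.
- apply: cvg_at_right_filter; apply: cvgN; apply: cvgMl; exact: cont_expk.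
- move=> x _.
  rewrite (_ : (fun y => - (expR (- (k * y)) / k)) = - (fun y => expR (- (k * y)) * k^-1)) //.
  rewrite derive1N// derive1Mr//.
  rewrite (_ : (fun y => expR (- (k * y))) = expR \o (fun y => - (k * y))) //.
  rewrite derive1_comp//.
  rewrite derive1N// derive1Ml// derive1_id derive1E.
  have /funeqP -> := @derive_expR R.
  by field; rewrite gt_eqF.
Qed.

Lemma int_expabs (k : R) : 0 < k ->
  (\int[mu]_y (expR (- (k * `|y|)))%:E = (2 / k)%:E)%E.
Proof.
move=> k0.
rewrite ge0_symfun_integralT.
- rewrite -set_itvcy.
  under eq_integral => y.
    rewrite inE /= in_itv /= andbT => y0.
    rewrite ger0_norm //.
    over.
  by rewrite int_expk // mulr0 oppr0 expR0 -EFinM mul1r.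
- by move=> ?; exact: expR_ge0.
- move=> z; apply: continuous_comp; last exact: continuous_expR.
  apply: (@continuousN _ R^o); apply: continuousM; first exact: cst_continuous.
  exact: norm_continuous.
- by move=> y /=; rewrite normrN.
Qed.

Lemma tangent_pow {a b p : R} : 0 < a -> 0 <= b -> 1 <= p ->
  a `^ p + p * a `^ (p - 1) * (b - a) <= b `^ p.
Proof.
move=> a0 b0 p1.
have [<-|p1'] := eqVneq 1 p.
  rewrite subrr powRr0 (powRr1 (ltW a0)) (powRr1 b0). lra.
have p1s : 1 < p by rewrite lt_neqAle p1' p1.
have p0 : 0 < p by lra.
have pm0 : 0 < p - 1 by lra.
set P := p / (p - 1).
have P0 : 0 < P by rewrite /P divr_gt0.
have hPQ : P^-1 + p^-1 = 1.
  by rewrite /P invf_div; field; rewrite ?gt_eqF.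
have := @conjugate_powR R (a `^ (p - 1)) b P p (powR_ge0 _ _) b0 P0 p0 hPQ.
rewrite -powRrM /P (_ : (p - 1) * (p / (p - 1)) = p); last by field; rewrite gt_eqF.
have e : a * a `^ (p - 1) = a `^ p by rewrite mulr_powRB1 // ltW.
move=> h.
have hp := powR_ge0 a p.
have : p * (a `^ (p - 1) * b) <= (p - 1) * a `^ p + b `^ p.
  have -> : (p - 1) * a `^ p + b `^ p = p * (a `^ p / (p / (p - 1)) + b `^ p / p).
    by field; rewrite !gt_eqF.
  by rewrite ler_pM2l.
rewrite -e; nra.
Qed.

Lemma tangent_abs (a y p : R) : 0 < a -> 1 <= p ->
  a `^ p + p * a `^ (p - 1) * (y - a) <= `|y| `^ p.
Proof.
move=> a0 p1; apply: (le_trans _ (tangent_pow a0 (normr_ge0 y) p1)).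
rewrite lerD2l ler_pM2l ?mulr_gt0 ?powR_gt0 //; last lra.
by rewrite lerD2r ler_norm.
Qed.

Lemma abs_le_pow (y p : R) : 1 <= p -> `|y| - 1 <= `|y| `^ p.
Proof.
move=> p1; have [y1|y1] := leP 1 `|y|.
  by apply: (le_trans _ (le1r_powR y1 p1)); lra.
by apply: (le_trans _ (powR_ge0 _ _)); lra.
Qed.

Lemma powle_1Dt (t q : R) : 0 <= t -> 0 <= q <= 1 -> t `^ q <= 1 + t.
Proof.
move=> t0' /andP[q0 q1].
have [t00|t0] := eqVneq t 0.
  rewrite t00; have [->|qn0] := eqVneq q 0; first by rewrite powRr0; lra.
  by rewrite powR0 //; lra.
have {t0' t0} t0 : 0 < t by rewrite lt_neqAle eq_sym t0 t0'.
have [t1|t1] := leP 1 t.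
  by apply: (le_trans (ler1_powR t1 q1)); lra.
have : t `^ q <= t `^ 0 by apply: ger_powR => //; rewrite t0 ltW.
rewrite powRr0 => h; lra.
Qed.

Lemma Gamma_int (q : R) : 0 <= q <= 1 ->
  (0 < \int[mu]_(t in `]0%R, +oo[) (t `^ q * expR (- t))%:E <= 4%:E)%E.
Proof.
move=> q01.
have mf : measurable_fun [set: R] (fun t : R => t `^ q * expR (- t)).
  apply: measurable_funM; first exact: measurable_powR.
  by apply: measurableT_comp; [exact: measurable_expR|exact: oppr_measurable].
have mfE (D : set R) : measurable D -> measurable_fun D (fun t : R => (t `^ q * expR (- t))%:E).
  by move=> mD; apply/measurable_EFinP; exact: measurable_funTS.
have f0 (t : R) : (0 <= (t `^ q * expR (- t))%:E)%E.
  by rewrite lee_fin mulr_ge0 ?powR_ge0 ?expR_ge0.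
apply/andP; split.
  apply: (@lt_le_trans _ _ (\int[mu]_(t in `[1%R, 2%R]) (t `^ q * expR (- t))%:E)%E); last first.
    apply: ge0_subset_integral => //; first exact: mfE.
    by move=> t; rewrite /= !in_itv /= andbT => /andP[t1 _]; lra.
  apply: (@lt_le_trans _ _ (\int[mu]_(t in `[1%R, 2%R]) (cst (expR (- 2))%:E t))%E).
    rewrite integral_cst //= lebesgue_measure_itv /= ifT; last by rewrite lte_fin; lra.
    by rewrite -EFinD -EFinM lte_fin mulr_gt0 ?expR_gt0 //; lra.
  apply: ge0_le_integral => //.
  - by move=> t _; rewrite lee_fin expR_ge0.
  - exact: mfE.
  move=> t; rewrite /= in_itv /= => /andP[t1 t2]; rewrite lee_fin.
  rewrite -[X in X <= _]mul1r.
  apply: ler_pM => //.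
    by have := @ler_powR R t t1 0 q; rewrite powRr0; apply; case/andP: q01.
  by rewrite ler_expR; lra.
rewrite integral_itv_obnd_cbnd; last exact: mfE.
apply: (@le_trans _ _ (\int[mu]_(t in `[0%R, +oo[) (2 * expR (- (2^-1 * t)))%:E)%E).
  apply: ge0_le_integral => //.
  - exact: mfE.
  - apply/measurable_EFinP; apply: measurable_funTS; apply: measurable_funM.
      exact: measurable_cst.
    apply: measurableT_comp; first exact: measurable_expR.
    by apply: measurableT_comp => //; apply: measurable_funM.
  move=> t; rewrite /= in_itv /= andbT => t0; rewrite lee_fin.
  have h1 := @powle_1Dt t q t0 q01.
  have h2 := expR_ge1Dx (t / 2).
  apply: (@le_trans _ _ (2 * expR (t / 2) * expR (- t))).
    by rewrite ler_pM2r ?expR_gt0 //; lra.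
  rewrite -mulrA -expRD ler_pM2l // ler_expR; lra.
under eq_integral => t _ do rewrite EFinM.
rewrite ge0_integralZl_EFin //.
- by rewrite int_expk ?mulr0 ?oppr0 ?expR0 -?EFinM ?lee_fin; lra.
- apply/measurable_EFinP; apply: measurable_funTS.
  apply: measurableT_comp; first exact: measurable_expR.
  by apply: measurableT_comp => //; apply: measurable_funM.
Qed.
End A.

Section B.
Context {R : realType}.
Notation mu := (@lebesgue_measure R).
Variable p : R.

Definition cc := (2 * gamma_p p)^-1.

Lemma gamma_p_gt0 (hp : 1 <= p) : 0 < gamma_p p.
Proof.
rewrite /gamma_p /Gamma.
have -> : 1 + p^-1 - 1 = p^-1 by rewrite addrAC subrr add0r.
have q01 : 0 <= p^-1 <= 1.
  have p0 : 0 < p by apply: lt_le_trans hp.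
  by rewrite invr_ge0 (ltW p0) /= invf_le1.
have /andP[h1 h2] := Gamma_int _ q01.
move: h1 h2; case: (\int[mu]_(t in _) _)%E => //= r.
Qed.

Lemma cc_gt0 (hp : 1 <= p) : 0 < cc.
Proof. by rewrite /cc invr_gt0 mulr_gt0 // gamma_p_gt0. Qed.

Lemma nu_densityE y : nu_density p y = cc * expR (- (`|y| `^ p)).
Proof. by []. Qed.

Lemma mnu_fun : measurable_fun [set: R] (fun y : R => expR (- (`|y| `^ p))).
Proof.
apply: measurableT_comp; first exact: measurable_expR.
apply: measurableT_comp; first exact: oppr_measurable.
apply: (measurableT_comp (measurable_powR p)); exact: normr_measurable.
Qed.


Lemma mnuE (D : set R) : measurable D ->
  measurable_fun D (fun y : R => (nu_density p y)%:E).
Proof.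
move=> mD; apply/measurable_EFinP; apply: measurable_funTS.
apply: measurable_funM; first exact: measurable_cst.
exact: mnu_fun.
Qed.

Lemma nu_dens_ge0 (hp : 1 <= p) y : (0 <= (nu_density p y)%:E)%E.
Proof. by rewrite lee_fin nu_densityE mulr_ge0 ?expR_ge0 // ltW // cc_gt0. Qed.

Lemma nu_upper (hp : 1 <= p) x : 1 <= x ->
  (nu p `[x, +oo[ <= (cc * expR (- x `^ p))%:E)%E.
Proof.
move=> x1; rewrite /nu.
have c0 := cc_gt0 hp.
apply: (@le_trans _ _ (\int[mu]_(y in `[x, +oo[) ((cc * expR (- x `^ p + x)) * expR (- (1 * y)))%:E)%E).
  apply: ge0_le_integral => //.
  - by move=> y _; exact: nu_dens_ge0.
  - exact: mnuE.
  - apply/measurable_EFinP; apply: measurable_funTS.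
    apply: measurable_funM; first exact: measurable_cst.
    apply: measurableT_comp; first exact: measurable_expR.
    by apply: measurableT_comp => //; apply: measurable_funM.
  move=> y; rewrite /= in_itv /= andbT => xy; rewrite lee_fin nu_densityE.
  rewrite -mulrA -expRD ler_pM2l // ler_expR.
  have x0 : 0 < x by apply: lt_le_trans x1.
  have := @tangent_abs R x y p x0 hp.
  have : 1 <= x `^ (p - 1).
    have := @ler_powR R x x1 0 (p - 1); rewrite powRr0; apply.
    by rewrite subr_ge0.
  move=> h1 h2.
  have h3 : 1 <= p * x `^ (p - 1) by nra.
  have h4 : 0 <= y - x by rewrite subr_ge0.
  nra.
under eq_integral => y _ do rewrite EFinM.
rewrite ge0_integralZl_EFin //.
- rewrite int_expk // -EFinM lee_fin mul1r divr1 -mulrA -expRD.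
  by rewrite -addrA subrr addr0.
- apply/measurable_EFinP; apply: measurable_funTS.
  apply: measurableT_comp; first exact: measurable_expR.
  by apply: measurableT_comp => //; apply: measurable_funM.
- by rewrite mulr_ge0 ?expR_ge0 // ltW.
Qed.

Lemma nu_lower (hp : 1 <= p) x : 0 <= x ->
  ((cc * expR (- (x + 1) `^ p))%:E <= nu p `[x, +oo[)%E.
Proof.
move=> x0; rewrite /nu.
have c0 := cc_gt0 hp.
apply: (@le_trans _ _ (\int[mu]_(y in `[x, (x + 1)%R]) (nu_density p y)%:E)%E); last first.
  apply: ge0_subset_integral => //; first exact: mnuE.
  - by move=> y _; exact: nu_dens_ge0.
  by move=> y; rewrite /= !in_itv /= andbT => /andP[].
apply: (@le_trans _ _ (\int[mu]_(y in `[x, (x + 1)%R]) (cst (cc * expR (- (x + 1) `^ p))%:E y))%E).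
  rewrite integral_cst //= lebesgue_measure_itv /= ifT; last by rewrite lte_fin; lra.
  by rewrite -EFinD -EFinM lee_fin addrAC subrr add0r mulr1.
apply: ge0_le_integral => //.
- by move=> y _; rewrite lee_fin mulr_ge0 ?expR_ge0 // ltW.
- exact: mnuE.
move=> y; rewrite /= in_itv /= => /andP[xy yx1]; rewrite lee_fin nu_densityE.
rewrite ler_pM2l // ler_expR lerN2.
apply: ge0_ler_powR; rewrite ?nnegrE //; try lra.
rewrite ger0_norm //; lra.
Qed.
End B.

Section C.
Context {R : realType}.
Notation mu := (@lebesgue_measure R).
Variable p : R.

Lemma mgf_fun_m (t : R) (D : set R) : measurable D ->
  measurable_fun D (fun y : R => (expR (t * y) * nu_density p y)%:E).
Proof.
move=> mD; apply/measurable_EFinP; apply: measurable_funTS.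
apply: measurable_funM.
  apply: measurableT_comp; first exact: measurable_expR.
  by apply: measurable_funM => //; exact: measurable_cst.
apply: measurable_funM; first exact: measurable_cst.
exact: (mnu_fun p).
Qed.

Lemma mgf_ge0 (hp : 1 <= p) t y : (0 <= (expR (t * y) * nu_density p y)%:E)%E.
Proof.
rewrite lee_fin mulr_ge0 ?expR_ge0 //.
by have := nu_dens_ge0 p hp y; rewrite lee_fin.
Qed.

Lemma mgf_lower_gen (hp : 1 <= p) x t a : 0 <= a -> a <= x ->
  (forall y, a <= y <= a + 1 -> t * x <= t * y) ->
  ((expR (t * x) * (cc p * expR (- (x + 1) `^ p)))%:E <= mgf p t)%E.
Proof.
move=> a0 ax ht; rewrite /mgf.
have c0 := cc_gt0 p hp.
apply: (@le_trans _ _ (\int[mu]_(y in `[a, (a + 1)%R]) (expR (t * y) * nu_density p y)%:E)%E); last first.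
  apply: ge0_subset_integral => //; first exact: mgf_fun_m.
  by move=> y _; exact: mgf_ge0.
apply: (@le_trans _ _ (\int[mu]_(y in `[a, (a + 1)%R]) (cst (expR (t * x) * (cc p * expR (- (x + 1) `^ p)))%:E y))%E).
  rewrite integral_cst //= lebesgue_measure_itv /= ifT; last by rewrite lte_fin; lra.
  by rewrite -EFinD -EFinM lee_fin addrAC subrr add0r mulr1.
apply: ge0_le_integral => //.
- by move=> y _; rewrite lee_fin mulr_ge0 ?mulr_ge0 ?expR_ge0 // ltW.
- exact: mgf_fun_m.
move=> y; rewrite /= in_itv /= => /andP[ay ya1]; rewrite lee_fin nu_densityE.
apply: ler_pM; rewrite ?expR_ge0 ?mulr_ge0 ?expR_ge0 ?(ltW c0) //.
  by rewrite ler_expR; apply: ht; rewrite ay ya1.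
rewrite ler_pM2l // ler_expR lerN2.
apply: ge0_ler_powR; rewrite ?nnegrE //; try lra.
rewrite ger0_norm //; lra.
Qed.

Lemma mgf_lower (hp : 1 <= p) x t : 1 <= x ->
  ((expR (t * x) * (cc p * expR (- (x + 1) `^ p)))%:E <= mgf p t)%E.
Proof.
move=> x1; have [t0|t0] := leP 0 t.
  apply: (@mgf_lower_gen hp x t x) => //; first lra.
  by move=> y /andP[xy _]; rewrite ler_wpM2l.
apply: (@mgf_lower_gen hp x t (x - 1)); try lra.
move=> y /andP[_ yx]; rewrite ler_nM2l //; lra.
Qed.


Lemma ln_L (hp : 1 <= p) x t :
  ln (expR (t * x) * (cc p * expR (- (x + 1) `^ p))) = t * x + ln (cc p) - (x + 1) `^ p.
Proof.
have c0 := cc_gt0 p hp.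
rewrite lnM ?posrE ?mulr_gt0 ?expR_gt0 // expRK lnM ?posrE ?expR_gt0 // expRK.
by rewrite addrA.
Qed.

Lemma Lambda_lower (hp : 1 <= p) x t : 1 <= x ->
  ((t * x + ln (cc p) - (x + 1) `^ p)%:E <= Lambda p t)%E.
Proof.
move=> x1; have h := mgf_lower hp x t x1.
have c0 := cc_gt0 p hp.
have L0 : 0 < expR (t * x) * (cc p * expR (- (x + 1) `^ p)).
  by rewrite mulr_gt0 ?expR_gt0 ?mulr_gt0.
rewrite /Lambda; move: h; case: (mgf p t) => [r| |] //=.
  rewrite !lee_fin => h; rewrite -ln_L //.
  by rewrite ler_ln ?posrE // (lt_le_trans L0 h).
  by move=> _; rewrite leey.
Qed.

Lemma Lambda_star_upper (hp : 1 <= p) x : 1 <= x ->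
  (Lambda_star p x <= ((x + 1) `^ p - ln (cc p))%:E)%E.
Proof.
move=> x1; apply: ge_ereal_sup => _ [t _ <-].
have := Lambda_lower hp x t x1.
case: (Lambda p t) => [r| |] //=.
  move=> h; have := h; rewrite lee_fin => h1.
  have -> : ((t * x)%:E + (- r)%:E = (t * x - r)%:E)%E by [].
  rewrite lee_fin; lra.
by move=> _; rewrite addeNy leNye.
Qed.

End C.

Section D.
Context {R : realType}.
Notation mu := (@lebesgue_measure R).
Variable p : R.

Definition t0 (x d : R) := (1 - d) * p * x `^ (p - 1).

Lemma mgf_upper (hp : 1 <= p) x d : 1 <= x -> 0 < d < 1 ->
  (mgf p (t0 x d) <= (expR (t0 x d * x - (1 - d) * x `^ p) * cc p * expR d * (2 / d))%:E)%E.
Proof.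
move=> x1 /andP[d0 d1]; rewrite /mgf.
have c0 := cc_gt0 p hp.
set K := expR (t0 x d * x - (1 - d) * x `^ p) * cc p * expR d.
have K0 : 0 < K by rewrite /K !mulr_gt0 ?expR_gt0.
apply: (@le_trans _ _ (\int[mu]_(y in setT) (K * expR (- (d * `|y|)))%:E)%E).
  apply: ge0_le_integral => //.
  - by move=> y _; exact: mgf_ge0.
  - exact: mgf_fun_m.
  - apply/measurable_EFinP; apply: measurable_funM; first exact: measurable_cst.
    apply: measurableT_comp; first exact: measurable_expR.
    apply: measurableT_comp; first exact: oppr_measurable.
    apply: measurable_funM; first exact: measurable_cst.
    exact: normr_measurable.
  move=> y _; rewrite lee_fin nu_densityE.
  have eL : expR (t0 x d * y) * (cc p * expR (- (`|y| `^ p))) =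
            cc p * expR (t0 x d * y + - (`|y| `^ p)) by rewrite expRD; ring.
  have eR : K * expR (- (d * `|y|)) =
     cc p * expR ((t0 x d * x - (1 - d) * x `^ p) + d + - (d * `|y|)).
    by rewrite /K !expRD; ring.
  rewrite eL eR ler_pM2l // ler_expR.
  have x0 : 0 < x by apply: lt_le_trans x1.
  have h1 := @tangent_abs R x y p x0 hp.
  have h2 := @abs_le_pow R y p hp.
  have dd : 0 <= 1 - d by lra.
  have h1' := ler_wpM2l dd h1.
  have h2' := ler_wpM2l (ltW d0) h2.
  rewrite /t0; lra.
under eq_integral => y _ do rewrite EFinM.
rewrite ge0_integralZl_EFin //; last by rewrite ltW.
- by rewrite /= int_expabs // -EFinM.
- apply/measurable_EFinP.
  apply: measurableT_comp; first exact: measurable_expR.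
  apply: measurableT_comp; first exact: oppr_measurable.
  apply: measurable_funM; first exact: measurable_cst.
  exact: normr_measurable.
Qed.


Lemma Lambda_star_lower (hp : 1 <= p) x d : 1 <= x -> 0 < d < 1 ->
  (((1 - d) * x `^ p - ln (cc p * expR d * (2 / d)))%:E <= Lambda_star p x)%E.
Proof.
move=> x1 d01.
have c0 := cc_gt0 p hp.
have /andP[d0 d1] := d01.
have hu := mgf_upper hp x d x1 d01.
have hl := mgf_lower p hp x (t0 x d) x1.
apply: (@le_trans _ _ ((t0 x d * x)%:E - Lambda p (t0 x d))%E); last first.
  by apply: ereal_sup_ubound; exists (t0 x d).
rewrite /Lambda; move: hu hl; case: (mgf p (t0 x d)) => [r| |] //=.
- rewrite !lee_fin => hu hl.
  have L0 : 0 < expR (t0 x d * x) * (cc p * expR (- (x + 1) `^ p)).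
    by rewrite mulr_gt0 ?expR_gt0 ?mulr_gt0.
  have r0 : 0 < r := lt_le_trans L0 hl.
  have U0 : 0 < cc p * expR d * (2 / d).
    by rewrite mulr_gt0 ?divr_gt0 // mulr_gt0 // expR_gt0.
  have E0 : 0 < expR (t0 x d * x - (1 - d) * x `^ p) * cc p * expR d * (2 / d).
    by rewrite mulr_gt0 ?divr_gt0 // mulr_gt0 // ?expR_gt0 // mulr_gt0 // expR_gt0.
  have : ln r <= ln (expR (t0 x d * x - (1 - d) * x `^ p) * cc p * expR d * (2 / d)).
    by rewrite ler_ln ?posrE.
  rewrite -!mulrA lnM ?posrE ?expR_gt0 //; last by rewrite mulrA.
  rewrite expRK => h.
  lra.
Qed.
End D.

Section E.
Context {R : realType}.
Notation mu := (@lebesgue_measure R).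
Variable p : R.

Lemma A_bounds (hp : 1 <= p) x : 1 <= x ->
  x `^ p - ln (cc p) <= - ln (fine (nu p `[x, +oo[)) <= (x + 1) `^ p - ln (cc p).
Proof.
move=> x1; have c0 := cc_gt0 p hp.
have hu := nu_upper p hp x x1.
have hl := nu_lower p hp x (le_trans ler01 x1).
move: hu hl; case: (nu p _) => [n| |] //=.
- rewrite !lee_fin => hu hl.
  have L0 : 0 < cc p * expR (- (x + 1) `^ p) by rewrite mulr_gt0 ?expR_gt0.
  have n0 : 0 < n := lt_le_trans L0 hl.
  have h1 : ln n <= ln (cc p * expR (- x `^ p)).
    by rewrite ler_ln ?posrE ?mulr_gt0 ?expR_gt0.
  have h2 : ln (cc p * expR (- (x + 1) `^ p)) <= ln n.
    by rewrite ler_ln ?posrE ?mulr_gt0 ?expR_gt0.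
  move: h1 h2; rewrite !lnM ?posrE ?expR_gt0 // !expRK => h1 h2.
  apply/andP; split; lra.
Qed.


Definition KK (d : R) := ln (cc p * expR d * (2 / d)).

Lemma B_bounds (hp : 1 <= p) x d : 1 <= x -> 0 < d < 1 ->
  (1 - d) * x `^ p - KK d <= fine (Lambda_star p x) <= (x + 1) `^ p - ln (cc p).
Proof.
move=> x1 d01.
have hu := Lambda_star_upper p hp x x1.
have hl := Lambda_star_lower p hp x d x1 d01.
move: hu hl; case: (Lambda_star p x) => [n| |] //=.
- by rewrite !lee_fin => hu hl; apply/andP; split.
Qed.

Lemma pow_ratio (hp : 1 <= p) s x : 0 < s -> 1 <= x -> p / ln (1 + s) <= x ->
  (x + 1) `^ p <= (1 + s) * x `^ p.
Proof.
move=> s0 x1 hx.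
have x0 : 0 < x by apply: lt_le_trans x1.
have ls0 : 0 < ln (1 + s) by apply: ln_gt0; lra.
have -> : x + 1 = x * (1 + x^-1) by rewrite mulrDr mulr1 mulfV ?gt_eqF.
have xi0 : 0 < x^-1 by rewrite invr_gt0.
have xi1 : 0 <= 1 + x^-1 by lra.
rewrite (powRM p (ltW x0) xi1) mulrC ler_wpM2r ?powR_ge0 //.
rewrite /powR gt_eqF; last lra.
rewrite -[X in _ <= X]lnK ?posrE; last lra.
rewrite ler_expR.
have h1 : ln (1 + x^-1) <= x^-1 by apply: le_ln1Dx; lra.
have h2 : p * x^-1 <= ln (1 + s).
  have e1 : p = (p / ln (1 + s)) * ln (1 + s) by rewrite divfK ?gt_eqF.
  have h3 : p <= x * ln (1 + s).
    by rewrite [X in X <= _]e1 ler_wpM2r // ltW.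
  have h4 := ler_wpM2r (ltW xi0) h3.
  by rewrite mulrAC mulfV ?gt_eqF // mul1r in h4.
have p0 : 0 <= p by lra.
have := ler_wpM2l p0 h1; lra.
Qed.

End E.

Theorem theorem1p2 (R : realType) (p : R) (hp : 1 <= p) :
  (- ln (fine (nu p `[x, +oo[)) / fine (Lambda_star p x)) @[x --> +oo] --> (1 : R).
Proof.
apply/cvgrPdist_lt => e e0.
have [m [m0 me mh]] : exists m : R, [/\ 0 < m, m <= e & m <= 2^-1].
  exists (Num.min e 2^-1); split.
  - by rewrite lt_min; apply/andP; split => //; rewrite invr_gt0.
  - by rewrite ge_min lexx.
  - by rewrite ge_min lexx orbT.
pose s := m / 10.
have s0 : 0 < s by rewrite /s divr_gt0.
have s10 : 10 * s = m by rewrite /s mulrC divfK.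
clearbody s.
have s20 : s <= 1 / 20 by lra.
have se : 10 * s <= e by lra.
have s1 : 0 < s < 1 by apply/andP; split; lra.
near=> x.
have x1 : 1 <= x by near: x; apply: nbhs_pinfty_ge; exact: num_real.
have x2 : p / ln (1 + s) <= x by near: x; apply: nbhs_pinfty_ge; exact: num_real.
have x3 : (`|KK p s| + `|ln (cc p)|) / s <= x by near: x; apply: nbhs_pinfty_ge; exact: num_real.
have xu : x <= x `^ p by exact: le1r_powR.
have hv := pow_ratio p hp s x s0 x1 x2.
have /andP[hA1 hA2] := A_bounds p hp x x1.
have /andP[hB1 hB2] := B_bounds p hp x s x1 s1.
set u := x `^ p in xu hv hA1 hA2 hB1 hB2 *.
set A := - ln (fine (nu p `[x, +oo[)) in hA1 hA2 *.
set B := fine (Lambda_star p x) in hB1 hB2 *.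
set K := KK p s in x3 hB1 *.
set lc := ln (cc p) in x3 hA1 hA2 hB2 *.
have su : `|K| + `|lc| <= s * u.
  have := ler_wpM2l (ltW s0) (le_trans x3 xu).
  by rewrite mulrC divfK ?gt_eqF.
have hK := ler_norm K.
have hK' : - K <= `|K| by rewrite -normrN ler_norm.
have hl := ler_norm lc.
have hl' : - lc <= `|lc| by rewrite -normrN ler_norm.
have u0 : 0 < u by lra.
have hsu : 0 < s * u by rewrite mulr_gt0.
have A1 : (1 - s) * u <= A by lra.
have A2 : A <= (1 + 2 * s) * u by lra.
have B1 : (1 - 2 * s) * u <= B by lra.
have B2 : B <= (1 + 2 * s) * u by lra.
have B0 : 0 < B.
  have : 0 < (1 - 2 * s) * u by rewrite mulr_gt0 //; lra.
  lra.
have hss : s * (s * u) <= 1 / 20 * (s * u) by rewrite ler_wpM2r // ltW.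
have hB1' := ler_wpM2l (_ : 0 <= 1 + 10 * s) B1.
have hB2' := ler_wpM2l (_ : 0 <= 1 - 10 * s) B2.
have r1 : A / B < 1 + 10 * s.
  rewrite ltr_pdivrMr //.
  have : 0 <= 1 + 10 * s by lra.
  move/hB1' => {}hB1'. lra.
have r2 : 1 - 10 * s < A / B.
  rewrite ltr_pdivlMr //.
  have : 0 <= 1 - 10 * s by lra.
  move/hB2' => {}hB2'. lra.
rewrite ltr_norml; apply/andP; split; lra.
Unshelve. all: end_near.
Qed.
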